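(* Let $n,m$ be integers with either $m=n-1\geq 0$ or $m=n-2\geq 0$, and let $H(s)=Q_{nm}(s)/P_{nm}(s)$ be the $(n,m)$ Padé approximant of $e^{-s}$. Then $H$ yields a maximally flat approximation of order $n$ of the ideal (unit-amplitude) lowpass characteristic: $$|H(j\omega)|^2=1+c\,\omega^{2n}+O(\omega^{2n+2})\quad(\omega\to0)$$ for some constant $c\neq0$.
   Context: The $(n,m)$ Padé approximant of $e^{-s}$ is $Q_{nm}(s)/P_{nm}(s)$ with $Q_{nm}(s)=\frac{n!}{(n+m)!}\sum_{k=0}^{m}\binom{m}{k}\frac{(n+k)!}{n!}(-s)^{m-k}$ and $P_{nm}(s)=\frac{m!}{(n+m)!}\sum_{k=0}^{n}\binom{n}{k}\frac{(m+k)!}{m!}s^{n-k}$ (equivalently, the unique rational function with $\deg Q\le m$, $\deg P\le n$, $P(0)=1$, $P(s)e^{-s}-Q(s)=O(s^{n+m+1})$). An amplitude approximation of unit amplitude is maximally flat of order $k$ if, apart from the constant term $1$, the Taylor expansion of $|H(j\omega)|^2$ about $\omega=0$ begins with the term in $\omega^{2k}$. *)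

(* Defs.v *)
From Stdlib Require Import Reals Lra Lia Arith Factorial.
Open Scope R_scope.

Definition Cx : Type := (R * R)%type.
Definition Cadd (z w : Cx) : Cx := (fst z + fst w, snd z + snd w).
Definition Cmul (z w : Cx) : Cx :=
  (fst z * fst w - snd z * snd w, fst z * snd w + snd z * fst w).
Definition Cscale (a : R) (z : Cx) : Cx := (a * fst z, a * snd z).
Definition Cneg (z : Cx) : Cx := (- fst z, - snd z).
Fixpoint Cpow (z : Cx) (k : nat) : Cx :=
  match k with O => (1, 0) | S k' => Cmul z (Cpow z k') end.
Definition Cnormsq (z : Cx) : R := fst z * fst z + snd z * snd z.

Fixpoint Csum (f : nat -> Cx) (N : nat) : Cx :=
  match N with O => f O | S N' => Cadd (Csum f N') (f N) end.

Definition Qnm (n m : nat) (s : Cx) : Cx :=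
  Cscale (INR (fact n) / INR (fact (n + m)))
    (Csum (fun k => Cscale (C m k * (INR (fact (n + k)) / INR (fact n)))
                           (Cpow (Cneg s) (m - k))) m).

Definition Pnm (n m : nat) (s : Cx) : Cx :=
  Cscale (INR (fact m) / INR (fact (n + m)))
    (Csum (fun k => Cscale (C n k * (INR (fact (m + k)) / INR (fact m)))
                           (Cpow s (n - k))) n).

Definition jw (w : R) : Cx := (0, w).

Definition pade_amp2 (n m : nat) (w : R) : R :=
  Cnormsq (Qnm n m (jw w)) / Cnormsq (Pnm n m (jw w)).

Definition maximally_flat_of_order (f : R -> R) (k : nat) : Prop :=
  exists c : R, c <> 0 /\
    exists K delta : R, 0 < delta /\
      forall w : R, Rabs w < delta ->
        Rabs (f w - 1 - c * w ^ (2 * k)) <= K * Rabs w ^ (2 * k + 2).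

(* Main.v *)
Require Import Defs.
From Stdlib Require Import Reals.
From HB Require Import structures.
From mathcomp Require Import all_boot all_order all_algebra.
From mathcomp Require Import Rstruct complex.
From mathcomp.algebra_tactics Require Import ring lra.
From mathcomp Require Import zify.
Import Order.TTheory GRing.Theory Num.Theory.
Local Close Scope R_scope.
Local Open Scope ring_scope.
Bind Scope ring_scope with R.
Local Open Scope complex_scope.
Local Notation cRe := (@complex.Re R).
Local Notation cIm := (@complex.Im R).

Lemma core_binom (m : nat) : forall j n : nat, (j <= n + m)%N ->
  \sum_(i < j.+1) (-1 : R)^+i * ('C(j, i))%:R * ('C(n + m - i, m))%:R
  = ('C(n + m - j, n))%:R.
Proof.
elim=> [|j IH] n hj.
  rewrite big_ord1 /= expr0 bin0 !mul1r subn0.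
  by rewrite -bin_sub ?leq_addl // addnK.
case: n hj => [|n] hj.
  rewrite add0n in hj *.
    rewrite big_ord_recl /= expr0 bin0 subn0 binn !mul1r bin0.
  rewrite big1 ?addr0 // => i _.
  have -> : 'C(m - bump 0 i, m) = 0%N by apply: bin_small; rewrite /bump; lia.
  by rewrite mulr0.
rewrite big_ord_recl /= expr0 bin0 subn0 !mul1r.
under eq_bigr => i _ do rewrite /bump /= add1n binS natrD mulrDr mulrDl.
rewrite big_split /=.
have HA : \sum_(i < j.+1) (-1 : R) ^+ i.+1 * ('C(j, i))%:R * ('C(n.+1 + m - i.+1, m))%:R
   = - ('C(n + m - j, n))%:R.
  rewrite -(IH n); last by lia.
  rewrite -sumrN; apply: eq_bigr => i _.
  rewrite exprS (_ : (n.+1 + m - i.+1 = n + m - i)%N); last by lia.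
  by rewrite mulN1r !mulNr.
have HB : ('C(n.+1 + m, m))%:R + \sum_(i < j.+1) (-1 : R) ^+ i.+1 * ('C(j, i.+1))%:R * ('C(n.+1 + m - i.+1, m))%:R
   = ('C(n.+1 + m - j, n.+1))%:R.
  rewrite -(IH n.+1); last by lia.
  have -> : \sum_(i < j.+1) (-1 : R) ^+ i * ('C(j, i))%:R * ('C(n.+1 + m - i, m))%:R
     = \sum_(i < j.+2) (-1 : R) ^+ i * ('C(j, i))%:R * ('C(n.+1 + m - i, m))%:R.
    by rewrite [RHS]big_ord_recr /= (@bin_small j j.+1) // mulr0n mulr0 mul0r addr0.
  rewrite [RHS]big_ord_recl /= expr0 bin0 subn0 !mul1r.
  by congr (_ + _); apply: eq_bigr => i _; rewrite /bump /= add1n.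
rewrite addrA HB HA.
rewrite (_ : (n.+1 + m - j = (n + m - j).+1)%N); last by lia.
rewrite (_ : (n.+1 + m - j.+1 = (n + m - j))%N); last by lia.
rewrite binS natrD; ring.
Qed.

Definition acoef (n m i : nat) : R :=
  ('C(n + m - i, m))%:R / (('C(n + m, n))%:R * (i`!)%:R).
Definition pP n m : {poly R} := \poly_(i < n.+1) acoef n m i.
Definition pQ n m : {poly R} := \poly_(i < m.+1) ((-1)^+i * acoef m n i).
Definition expo N : {poly R} := \poly_(i < N.+1) ((-1)^+i / (i`!)%:R).

Lemma fact_neq0 k : (k`!)%:R != 0 :> R.
Proof. by rewrite pnatr_eq0 -lt0n fact_gt0. Qed.

Lemma binNN (N n : nat) : (n <= N)%N -> ('C(N, n))%:R != 0 :> R.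
Proof. by move=> h; rewrite pnatr_eq0 -lt0n bin_gt0. Qed.

Lemma coef_pP n m i : (i <= n + m)%N -> (pP n m)`_i = acoef n m i.
Proof.
move=> hi; rewrite coef_poly; case: ltnP => // hn.
by rewrite /acoef (@bin_small (n + m - i) m) ?mulr0n ?mul0r //; lia.
Qed.

Lemma coef_pQ n m i : (i <= n + m)%N -> (pQ n m)`_i = (-1)^+i * acoef m n i.
Proof.
move=> hi; rewrite coef_poly; case: ltnP => // hn.
by rewrite /acoef (@bin_small (m + n - i) n) ?natr0 ?mulr0n ?mul0r ?mulr0 //; lia.
Qed.

Lemma sign_sub j i : (i <= j)%N -> (-1)^+(j - i) = (-1)^+j * (-1)^+i :> R.
Proof.
move=> hij; rewrite -{2}(subnK hij) exprD -mulrA -expr2 exprAC sqrrN !expr1n.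
by rewrite mulr1.
Qed.

Lemma term_eq N m j i (c : R) : (i <= j)%N -> c != 0 ->
  ('C(N - i, m))%:R / (c * (i`!)%:R) * ((-1)^+(j - i) / ((j - i)`!)%:R)
  = (-1)^+j / (c * (j`!)%:R) * ((-1)^+i * ('C(j, i))%:R * ('C(N - i, m))%:R) :> R.
Proof.
move=> hij hc.
have hf : (j`!)%:R = ('C(j, i))%:R * (i`!)%:R * ((j - i)`!)%:R :> R.
  by rewrite -!natrM -mulnA bin_fact.
rewrite hf sign_sub //.
have h1 := fact_neq0 i; have h2 := fact_neq0 (j - i); have h3 := @binNN _ _ hij.
by field; rewrite h1 h2 h3 hc.
Qed.

Lemma pade_coef n m j : (j <= n + m)%N ->
  (pP n m * expo (n + m))`_j = (pQ n m)`_j.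
Proof.
move=> hj; rewrite coefM coef_pQ //.
have hc := @binNN _ _ (leq_addr m n).
transitivity (\sum_(i < j.+1) (-1 : R)^+j / (('C(n + m, n))%:R * (j`!)%:R) *
   ((-1)^+i * ('C(j, i))%:R * ('C(n + m - i, m))%:R)).
  apply: eq_bigr => -[i hi] _ /=.
  rewrite coef_pP; last by lia.
  rewrite coef_poly ifT; last by lia.
  by rewrite /acoef term_eq.
rewrite -mulr_sumr core_binom // /acoef (addnC m n).
rewrite (_ : 'C(n + m, m) = 'C(n + m, n)); last by rewrite -bin_sub ?leq_addl // addnK.
rewrite -!mulrA; congr (_ * _); rewrite mulrC; congr (_ * _).
Qed.

Definition lowzero (k : nat) (p : {poly R}) := forall i, (i < k)%N -> p`_i = 0.

Lemma lz_add k p q : lowzero k p -> lowzero k q -> lowzero k (p + q).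
Proof. by move=> hp hq i hi; rewrite coefD hp ?hq ?addr0. Qed.
Lemma lz_opp k p : lowzero k p -> lowzero k (- p).
Proof. by move=> hp i hi; rewrite coefN hp ?oppr0. Qed.
Lemma lz_sub k p q : lowzero k p -> lowzero k q -> lowzero k (p - q).
Proof. by move=> hp hq; apply: lz_add => //; apply: lz_opp. Qed.
Lemma lz_mull k p q : lowzero k p -> lowzero k (q * p).
Proof.
move=> hp i hi; rewrite coefM big1 // => -[j hj] _ /=.
by rewrite hp ?mulr0 //; apply: leq_ltn_trans hi; apply: leq_subr.
Qed.
Lemma lz_mulr k p q : lowzero k p -> lowzero k (p * q).
Proof. by move=> hp; rewrite mulrC; apply: lz_mull. Qed.

Section Negp.
Variable K : comNzRingType.
Definition negp (p : {poly K}) : {poly K} := \poly_(i < size p) ((-1)^+i * p`_i).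

Lemma coef_negp p i : (negp p)`_i = (-1)^+i * p`_i.
Proof.
rewrite coef_poly; case: ltnP => // h.
by rewrite nth_default // mulr0.
Qed.

Lemma negpD p q : negp (p + q) = negp p + negp q.
Proof. by apply/polyP => i; rewrite coefD !coef_negp coefD mulrDr. Qed.
Lemma negpN p : negp (- p) = - negp p.
Proof. by apply/polyP => i; rewrite coefN !coef_negp coefN mulrN. Qed.
Lemma negpB p q : negp (p - q) = negp p - negp q.
Proof. by rewrite negpD negpN. Qed.
Lemma negp1 : negp 1 = 1.
Proof.
apply/polyP => i; rewrite coef_negp coef1.
by case: (i == 0%N) / eqP => [->|]; rewrite ?expr0 ?mul1r ?mulr0.
Qed.
Lemma negpM p q : negp (p * q) = negp p * negp q.
Proof.
apply/polyP => i; rewrite coef_negp !coefM mulr_sumr; apply: eq_bigr => -[j hj] _ /=.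
rewrite !coef_negp.
have hji : (j <= i)%N by [].
rewrite -{1}(subnK hji) exprD.
by ring.
Qed.
Lemma negpK p : negp (negp p) = p.
Proof.
apply/polyP => i; rewrite !coef_negp mulrA -expr2 exprAC sqrrN !expr1n.
by rewrite mul1r.
Qed.
Lemma horner_negp p x : (negp p).[x] = p.[- x].
Proof.
rewrite (@horner_coef_wide _ (size p)); last by apply: size_poly.
rewrite horner_coef; apply: eq_bigr => i _.
by rewrite coef_negp [(- x)^+ _]exprNn -mulrA mulrCA.
Qed.
End Negp.
Arguments negp {K}.
Arguments coef_negp {K}.

Lemma negp_map (K1 K2 : comNzRingType) (f : {rmorphism K1 -> K2}) (p : {poly K1}) :
  map_poly f (negp p) = negp (map_poly f p).
Proof.
apply/polyP => i; rewrite coef_map !coef_negp coef_map /=.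
by rewrite rmorphM rmorphXn rmorphN1.
Qed.

Lemma lz_negp k p : lowzero k p -> lowzero k (negp p).
Proof. by move=> hp i hi; rewrite coef_negp hp ?mulr0. Qed.

Lemma expo_coef N k : (k <= N)%N -> (expo N)`_k = (-1)^+k / (k`!)%:R.
Proof. by move=> hk; rewrite coef_poly ifT. Qed.

Lemma R1_lz n m : lowzero (n + m).+1 (pP n m * expo (n + m) - pQ n m).
Proof. by move=> i hi; rewrite coefB pade_coef ?subrr. Qed.

Lemma sqr_sign k : (-1)^+k * (-1)^+k = 1 :> R.
Proof. by rewrite -expr2 exprAC sqrrN !expr1n. Qed.

Lemma EE_lz N : lowzero N.+1 (expo N * negp (expo N) - 1).
Proof.
move=> i hi; rewrite coefB coefM coef1.
have -> : \sum_(k < i.+1) (expo N)`_k * (negp (expo N))`_(i - k)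
   = \sum_(k < i.+1) (i`!%:R)^-1 * ((-1)^+k * ('C(i, k))%:R * ('C(i + 0 - k, 0))%:R).
  apply: eq_bigr => -[k hk] _ /=.
  rewrite coef_negp !expo_coef; [|lia|lia].
  rewrite [(-1)^+(i - k) * _]mulrA sqr_sign mul1r bin0 mulr1.
  have hki : (k <= i)%N by [].
  have hf : (i`!)%:R = ('C(i, k))%:R * (k`!)%:R * ((i - k)`!)%:R :> R.
    by rewrite -!natrM -mulnA bin_fact.
  have h1 := fact_neq0 k; have h2 := fact_neq0 (i - k); have h3 := @binNN _ _ hki.
  rewrite hf; field; by rewrite h1 h2 h3.
rewrite -mulr_sumr core_binom ?addn0 ?subnn //.
by case: i hi => [|i] hi /=; rewrite ?bin0 ?bin0n /= ?mulr1 ?mulr0 ?invr1 ?subrr.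
Qed.

Lemma D_expand (P Q E R1 : {poly R}) : Q = P * E - R1 ->
  P * negp P - Q * negp Q = - (P * negp P * (E * negp E - 1)) + (P * E) * negp R1
    + (negp P * negp E) * R1 - R1 * negp R1.
Proof. by move=> ->; rewrite negpB negpM; ring. Qed.

Definition Dp n m : {poly R} := pP n m * negp (pP n m) - pQ n m * negp (pQ n m).

Lemma D_lz n m : lowzero (n + m).+1 (Dp n m).
Proof.
rewrite /Dp (@D_expand _ _ (expo (n + m)) (pP n m * expo (n + m) - pQ n m)); last first.
  by rewrite opprB addrCA subrr addr0.
have h1 := R1_lz n m; have h2 := EE_lz (n + m).
apply: lz_sub; [apply: lz_add; [apply: lz_add|]|].
- by apply: lz_opp; apply: lz_mull.
- by apply: lz_mull; apply: lz_negp.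
- by apply: lz_mull.
- by apply: lz_mulr.
Qed.

Lemma D_even n m : negp (Dp n m) = Dp n m.
Proof. by rewrite /Dp negpB !negpM !negpK [negp (pP n m) * _]mulrC [negp (pQ n m) * _]mulrC. Qed.

Lemma coef_mul_big (p q : {poly R}) i : ((size p + size q).-1 <= i)%N -> (p * q)`_i = 0.
Proof. by move=> h; rewrite nth_default //; apply: leq_trans (size_mul_leq _ _) h. Qed.

Lemma coef_mul_big2 (p q : {poly R}) a b i : (size p <= a)%N -> (size q <= b)%N ->
  ((a + b).-1 <= i)%N -> (p * q)`_i = 0.
Proof.
move=> ha hb hi; apply: coef_mul_big; apply: leq_trans hi.
by rewrite -!subn1 leq_sub2r // leq_add.
Qed.

Lemma size_negp (p : {poly R}) : (size (negp p) <= size p)%N.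
Proof. exact: size_poly. Qed.

Lemma D_coef_zero n m (i : nat) : (m < n)%N -> (n <= m + 2)%N -> i != (2 * n)%N -> (Dp n m)`_i = 0.
Proof.
move=> h1 h2 hi.
case: (ltnP i (n + m).+1) => hlo; first exact: D_lz.
have sP : (size (pP n m) <= n.+1)%N by apply: size_poly.
have sQ : (size (pQ n m) <= m.+1)%N by apply: size_poly.
have sP' : (size (negp (pP n m)) <= n.+1)%N by apply: leq_trans (size_negp _) sP.
have sQ' : (size (negp (pQ n m)) <= m.+1)%N by apply: leq_trans (size_negp _) sQ.
case: (ltnP (2 * n) i) => hhi.
  rewrite /Dp coefB (@coef_mul_big2 _ _ _ _ _ sP sP') ?(@coef_mul_big2 _ _ _ _ _ sQ sQ') ?subrr //; lia.
have hodd : i = (2 * n).-1 by lia.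
have ho : odd i by rewrite (_ : i = (2 * (n - 1)).+1); [rewrite mul2n /= odd_double | lia].
have := congr1 (fun p : {poly R} => p`_i) (D_even n m).
rewrite /= coef_negp -signr_odd ho expr1 mulN1r => h.
lra.
Qed.

Lemma D_lead_neq0 n m : (m < n)%N -> (Dp n m)`_(2 * n) != 0.
Proof.
move=> h1.
have sP : (size (pP n m) <= n.+1)%N by apply: size_poly.
have sQ : (size (pQ n m) <= m.+1)%N by apply: size_poly.
have sQ' : (size (negp (pQ n m)) <= m.+1)%N by apply: leq_trans (size_negp _) sQ.
rewrite /Dp coefB (@coef_mul_big2 _ _ _ _ _ sQ sQ') ?subr0; last by lia.
have hn2 : (n < (2 * n).+1)%N by lia.
rewrite coefM (bigD1 (Ordinal hn2)) /=; last by [].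
rewrite big1 ?addr0; last first.
  move=> -[j hj] /= hjn.
  have hjn' : j != n by apply: contra hjn => /eqP hj'; apply/eqP/val_inj.
  case: (ltnP n j) => hnj.
    by rewrite coef_poly ifN ?mul0r //; rewrite -leqNgt.
  have hjl : (j < n)%N by rewrite ltn_neqAle hjn' hnj.
  rewrite coef_negp [(pP n m)`_(2 * n - j)]coef_poly ifN ?mulr0 //; rewrite -leqNgt; lia.
rewrite coef_negp (_ : (2 * n - n = n)%N); last by lia.
have ha : acoef n m n != 0.
  rewrite /acoef addKn binn; apply: mulf_neq0; first exact: oner_neq0.
  rewrite invr_eq0; apply: mulf_neq0; [exact: (@binNN _ _ (leq_addr m n)) | exact: fact_neq0].
rewrite coef_poly ltnSn; apply: mulf_neq0 => //; apply: mulf_neq0 => //.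
by rewrite signr_eq0.
Qed.

Lemma D_size n m : (m < n)%N -> (n <= m + 2)%N -> (size (Dp n m) <= (2 * n).+1)%N.
Proof.
move=> h1 h2; apply/leq_sizeP => j hj; apply: D_coef_zero => //.
by rewrite neq_ltn hj orbT.
Qed.

Lemma D_eval n m (x : R[i]) : (m < n)%N -> (n <= m + 2)%N ->
  (map_poly (real_complex R) (Dp n m)).[x] = ((Dp n m)`_(2 * n))%:C * x ^+ (2 * n).
Proof.
move=> h1 h2.
rewrite (@horner_coef_wide _ (2 * n).+1); last by rewrite size_map_poly D_size.
rewrite big_ord_recr /= big1 ?add0r ?coef_map //.
move=> -[i hi] _ /=; rewrite coef_map /= D_coef_zero //.
  by rewrite mul0r.
by rewrite neq_ltn hi.
Qed.

Definition phi (z : Cx) : R[i] := Complex z.1 z.2.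

Lemma phi_add z w : phi (Cadd z w) = phi z + phi w.
Proof. by case: z w => [a b] [c d]. Qed.
Lemma phi_mul z w : phi (Cmul z w) = phi z * phi w.
Proof. by case: z w => [a b] [c d]. Qed.
Lemma phi_neg z : phi (Cneg z) = - phi z.
Proof. by case: z. Qed.
Lemma phi_scale a z : phi (Cscale a z) = a%:C * phi z.
Proof.
case: z => [b c]; rewrite /phi /Cscale /=.
rewrite -[(_ +i* _) * (_ +i* _)]/(_ +i* _).
by rewrite !mul0r subr0 addr0.
Qed.
Lemma phi_pow z k : phi (Cpow z k) = phi z ^+ k.
Proof. by elim: k => [|k IH] //=; rewrite phi_mul IH exprS. Qed.
Lemma phi_sum f N : phi (Csum f N) = \sum_(k < N.+1) phi (f k).
Proof. by elim: N => [|N IH] /=; rewrite ?big_ord1 // phi_add IH [RHS]big_ord_recr. Qed.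

Lemma fl n m k : (k <= n)%N ->
  Rmult (Rdiv (INR (Factorial.fact m)) (INR (Factorial.fact (n + m))))
        (Rmult (Binomial.C n k) (Rdiv (INR (Factorial.fact (m + k))) (INR (Factorial.fact m))))
  = acoef n m (n - k).
Proof.
move=> hk; rewrite /Binomial.C !RealsE /acoef ?minusE.
have e1 : (n + m - (n - k) = m + k)%N by lia.
rewrite e1.
have hb1 : ('C(m + k, m))%:R = ((m + k)`!)%:R / ((m`!)%:R * (k`!)%:R) :> R.
  rewrite -(@bin_fact (m + k) m) ?leq_addr // addKn natrM.
  by field; rewrite !fact_neq0.
have hb2 : ('C(n + m, n))%:R = ((n + m)`!)%:R / ((n`!)%:R * (m`!)%:R) :> R.
  rewrite -(@bin_fact (n + m) n) ?leq_addr // addKn natrM.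
  by field; rewrite !fact_neq0.
rewrite hb1 hb2.
have f1 := fact_neq0 m; have f2 := fact_neq0 n; have f3 := fact_neq0 k;
have f4 := fact_neq0 (n - k); have f5 := fact_neq0 (n + m); have f6 := fact_neq0 (m + k).
by field; rewrite ?f1 ?f2 ?f3 ?f4 ?f5 ?f6.
Qed.

Lemma rev_sum (V : nmodType) (F : nat -> V) n :
  \sum_(k < n.+1) F k = \sum_(k < n.+1) F (n - k)%N.
Proof.
rewrite -(big_mkord xpredT F) -(big_mkord xpredT (fun k => F (n - k)%N)).
rewrite big_nat_rev; apply: eq_big_nat => k hk.
by rewrite add0n subSS.
Qed.

Lemma phiP n m s : phi (Pnm n m s) = (map_poly (real_complex R) (pP n m)).[phi s].
Proof.
rewrite /Pnm phi_scale phi_sum.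
rewrite (@horner_coef_wide _ n.+1); last by rewrite size_map_poly; apply: size_poly.
rewrite (reindex_inj rev_ord_inj) /= mulr_sumr; apply: eq_bigr => -[k hk] _ /=.
rewrite coef_map /= coef_pP; last by lia.
rewrite (_ : (n.+1 - k.+1 = n - k)%N); last by lia.
rewrite phi_scale phi_pow mulrA -rmorphM.
congr (_%:C * _).
  rewrite (_ : acoef n m k = acoef n m (n - (n - k))); last by congr acoef; lia.
  exact: fl (leq_subr _ _).
by congr (_ ^+ _); rewrite -?minusE; lia.
Qed.

Lemma phiQ n m s : phi (Qnm n m s) = (map_poly (real_complex R) (pQ n m)).[phi s].
Proof.
rewrite /Qnm phi_scale phi_sum.
rewrite (@horner_coef_wide _ m.+1); last by rewrite size_map_poly; apply: size_poly.
rewrite (reindex_inj rev_ord_inj) /= mulr_sumr; apply: eq_bigr => -[k hk] _ /=.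
rewrite coef_map /= coef_pQ; last by lia.
rewrite (_ : (m.+1 - k.+1 = m - k)%N); last by lia.
rewrite phi_scale phi_pow phi_neg mulrA -rmorphM.
rewrite (_ : (m - (m - k))%coq_nat = k); last by rewrite -?minusE; lia.
rewrite [(- phi s) ^+ k]exprNn [in RHS]rmorphM [in RHS]rmorphXn [in RHS]rmorphN1 mulrCA -[RHS]mulrA.
congr (_ * (_ * _)).
congr (_%:C).
rewrite [(n + m)%coq_nat]Nat.add_comm.
rewrite (_ : acoef m n k = acoef m n (m - (m - k))); last by congr acoef; lia.
exact: fl (leq_subr _ _).
Qed.

Lemma Re_add (a b : R[i]) : cRe (a + b) = cRe a + cRe b.
Proof. by case: a b => [? ?] [? ?]. Qed.
Lemma Re_sub (a b : R[i]) : cRe (a - b) = cRe a - cRe b.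
Proof. by case: a b => [? ?] [? ?]. Qed.
Lemma Re_sum (I : Type) (r : seq I) (P : pred I) (F : I -> R[i]) :
  cRe (\sum_(i <- r | P i) F i) = \sum_(i <- r | P i) cRe (F i).
Proof. by apply: (big_morph (@complex.Re R) Re_add). Qed.
Lemma Re_scal (a : R) (z : R[i]) : cRe (a%:C * z) = a * cRe z.
Proof. by case: z => b c /=; rewrite mul0r subr0. Qed.

Definition jx (w : R) : R[i] := Complex 0 w.

Lemma jx_pow_bound (w : R) k : `|cRe (jx w ^+ k)| <= `|w| ^+ k /\ `|cIm (jx w ^+ k)| <= `|w| ^+ k.
Proof.
elim: k => [|k [IH1 IH2]].
  by rewrite !expr0 /= normr1 normr0 ler01.
rewrite exprS; move: IH1 IH2; case: (jx w ^+ k) => a b /= IH1 IH2.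
rewrite !mul0r sub0r add0r normrN !normrM exprS.
by split; apply: ler_wpM2l.
Qed.

Lemma jx_pow_le (w : R) j : (0 < j)%N -> `|w| <= 1 -> `|cRe (jx w ^+ j)| <= w ^+ 2.
Proof.
move=> hj hw.
case: j hj => [//|[|j]] _.
  by rewrite expr1 /= normr0 sqr_ge0.
have [h _] := jx_pow_bound w j.+2.
apply: le_trans h _.
rewrite -(real_normK (num_real w)).
by apply: ler_wiXn2l.
Qed.

Lemma Bbound (G : {poly R}) (w : R) : G`_0 = 1 -> `|w| <= 1 ->
  `|cRe ((map_poly (real_complex R) G).[jx w]) - 1| <= (\sum_(i < size G) `|G`_i|) * w ^+ 2.
Proof.
move=> h0 hw.
rewrite horner_coef size_map_poly Re_sum.
have hs : (0 < size G)%N.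
  by rewrite lt0n size_poly_eq0; apply/eqP => hG; move: h0; rewrite hG coef0 => /esym/eqP; rewrite oner_eq0.
case: (size G) hs => [//|s] _.
rewrite !big_ord_recl /= coef_map /= h0 mulr1 mul0r subr0 normr1.
rewrite addrAC subrr add0r mulrDl.
apply: le_trans (ler_norm_sum _ _ _) _.
rewrite mul1r -[X in X <= _]add0r; apply: lerD; first by rewrite sqr_ge0.
rewrite mulr_suml; apply: ler_sum => i _.
rewrite coef_map /= Re_scal normrM; apply: ler_wpM2l => //.
exact: jx_pow_le.
Qed.

Lemma cnorm_eq z : Cnormsq z = cRe (phi z * conjc (phi z)).
Proof. by case: z => a b; rewrite /Cnormsq /phi /= mulrN opprK. Qed.

Lemma conj_jx w : conjc (jx w) = - jx w.
Proof. by rewrite /jx -[- (_ *i)]/(Complex (- 0) (- w)) oppr0. Qed.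

Lemma conj_map (p : {poly R}) x :
  conjc ((map_poly (real_complex R) p).[x]) = (map_poly (real_complex R) p).[conjc x].
Proof.
rewrite -horner_map /=; congr (_.[_]); apply/polyP => i.
by rewrite !coef_map /= oppr0.
Qed.

Lemma cnorm_poly (p : {poly R}) z w : phi z = (map_poly (real_complex R) p).[jx w] ->
  Cnormsq z = cRe ((map_poly (real_complex R) (p * negp p)).[jx w]).
Proof.
move=> h; rewrite cnorm_eq h conj_map conj_jx -horner_negp -negp_map.
by rewrite rmorphM hornerM.
Qed.

Lemma horner_mapB (p q : {poly R}) (x : R[i]) :
  (map_poly (real_complex R) (p - q)).[x] =
  (map_poly (real_complex R) p).[x] - (map_poly (real_complex R) q).[x].
Proof. by rewrite rmorphB hornerD hornerN. Qed.

Lemma diff_eq n m w : (m < n)%N -> (n <= m + 2)%N ->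
  Cnormsq (Pnm n m (jw w)) - Cnormsq (Qnm n m (jw w))
  = (Dp n m)`_(2 * n) * (- w ^+ 2) ^+ n.
Proof.
move=> h1 h2.
rewrite (@cnorm_poly (pP n m) _ w) ?phiP // (@cnorm_poly (pQ n m) _ w) ?phiQ //.
rewrite -Re_sub -horner_mapB -/(Dp n m) D_eval //.
have hx : jx w ^+ 2 = (- w ^+ 2)%:C.
  rewrite expr2 /jx -[(_ +i* _) * (_ +i* _)]/(_ +i* _).
  by rewrite !mul0r !mulr0 sub0r addr0 expr2.
by rewrite exprM hx -rmorphXn -rmorphM.
Qed.

Lemma G0 n m : (pP n m * negp (pP n m))`_0 = 1.
Proof.
rewrite coefM big_ord1 subnn coef_negp expr0 mul1r coef_pP ?leq0n //.
rewrite /acoef subn0 fact0 mulr1.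
rewrite (_ : 'C(n + m, m) = 'C(n + m, n)); last by rewrite -bin_sub ?leq_addl // addnK.
by rewrite divff ?mulr1 // binNN // leq_addr.
Qed.

Lemma final_bound (B dd t w2 L : R) : 0 <= t -> 0 <= L -> 0 <= w2 -> 2^-1 <= B ->
  `|B - 1| <= L * w2 -> `|(B - dd * t) / B - 1 - (- dd) * t| <= 2 * `|dd| * L * (t * w2).
Proof.
move=> ht hL hw hB h.
have hB0 : B != 0 by apply/eqP => hB'; rewrite hB' in hB; lra.
have hBp : 0 < B by lra.
rewrite (_ : (B - dd * t) / B - 1 - (- dd) * t = (dd * t * (B - 1)) / B); last by field.
rewrite normrM normrV ?unitfE // (gtr0_norm hBp) ler_pdivrMr // !normrM (ger0_norm ht).
have hX : 0 <= `|dd| * t by rewrite mulr_ge0.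
have hY : 0 <= L * w2 by rewrite mulr_ge0.
have hZ : 0 <= `|B - 1| by [].
apply: le_trans (ler_wpM2l hX h) _.
rewrite (_ : 2 * `|dd| * L * (t * w2) * B = (`|dd| * t * (L * w2)) * (2 * B)); last by ring.
have hXY := mulr_ge0 hX hY.
move: hXY; set X := `|dd| * t * (L * w2) => hXY.
nra.
Qed.

Theorem theorem5 (n m : nat)
  (hnm : (m + 1 = n)%nat \/ (m + 2 = n)%nat) :
  maximally_flat_of_order (pade_amp2 n m) n.
Proof.
have h1 : (m < n)%N by case: hnm; lia.
have h2 : (n <= m + 2)%N by case: hnm; lia.
clear hnm.
set d := (Dp n m)`_(2 * n).
have hd : d != 0 := @D_lead_neq0 n m h1.
set dd := d * (-1)^+n.
set G := pP n m * negp (pP n m).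
set L : R := \sum_(i < size G) `|G`_i|.
have hL : 0 <= L by apply: sumr_ge0 => i _.
exists (- dd); split.
  move=> /eqP; rewrite oppr_eq0 mulf_eq0 signr_eq0 orbF.
  by apply/negP.
set e : R := (2 * L + 2)^-1.
have he0 : 0 < e by rewrite invr_gt0; lra.
have he : e * (2 * L + 2) = 1 by rewrite mulVf //; apply/eqP => h; lra.
exists (2 * `|dd| * L), e; split; first by apply/RltP.
move=> w /RltP hw; apply/RleP.
rewrite /pade_amp2 !RealsE in hw *.
rewrite (_ : (2 * n + 2)%coq_nat = (2 * n + 2)%N) // (_ : (2 * n)%coq_nat = (2 * n)%N) //.
set B := Cnormsq (Pnm n m (jw w)).
set A := Cnormsq (Qnm n m (jw w)).
have hA : A = B - dd * w ^+ (2 * n).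
  have := @diff_eq n m w h1 h2; rewrite -/B -/A -/d => hdiff.
  have -> : dd * w ^+ (2 * n) = B - A by rewrite hdiff /dd [(- w ^+ 2) ^+ n]exprNn -exprM mulrA.
  ring.
have hw0 : 0 <= `|w| by [].
have hw1 : `|w| <= 1 by nra.
have hBb : `|B - 1| <= L * w ^+ 2.
  rewrite /B (@cnorm_poly (pP n m) _ w) ?phiP //.
  by apply: Bbound => //; apply: G0.
have hw2 : w ^+ 2 <= `|w|.
  rewrite -(real_normK (num_real w)) expr2; nra.
have hLw : L * w ^+ 2 <= L * e.
  apply: ler_wpM2l => //; apply: le_trans hw2 _; exact: ltW.
have hB : 2^-1 <= B.
  move: hBb; rewrite ler_norml => /andP [hB1 _].
  nra.
have ht : 0 <= w ^+ (2 * n) by rewrite exprM exprn_ge0 // sqr_ge0.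
have := @final_bound B dd _ _ L ht hL (sqr_ge0 w) hB hBb.
rewrite -hA.
rewrite (_ : `|w| ^+ (2 * n + 2) = w ^+ (2 * n) * w ^+ 2) //.
by rewrite -normrX exprD ger0_norm // mulr_ge0 // sqr_ge0.
Qed.
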